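(* Let $V$ be a finite nonempty set of voters and $A$ a finite set of alternatives. Let $F:\mathcal{P}(V,A)\to S_2(A)$ be a consular election rule that is irreducible, weakly viable, strategy-proof for optimists and strategy-proof for pessimists. Then $F$ has a range dictator: there is a voter $i\in V$ such that for every profile $P$, $F(P)$ is the favourite committee of $P_i$ in the range of $F$.
   Context: A profile $P\in\mathcal{P}(V,A)$ assigns to each voter $i\in V$ a linear order $P_i$ on $A$ (with strict part $\succ_i$ and weak part $\succeq_i$); $P_i'P_{-i}$ denotes the profile obtained from $P$ by replacing $P_i$ with $P_i'$, and for $B\subseteq A$, $P|_B$ is the profile of restrictions to $B$. $S_2(A)$ is the set of $2$-element subsets of $A$. A consular election rule is a map $F:\mathcal{P}(V,A)\to S_2(A)$. For nonempty $W\subseteq A$, $\mathrm{best}(P_i,W)$ and $\mathrm{worst}(P_i,W)$ are the $P_i$-best and $P_i$-worst elements of $W$. $F$ is strategy-proof for optimists (SPO) if for every profile $P$, voter $i$ and linear order $P_i'$, with $W=F(P)$ and $W'=F(P_i'P_{-i})$, we have $\mathrm{best}(P_i,W)\succeq_i \mathrm{best}(P_i,W')$; it is strategy-proof for pessimists (SPP) if likewise $\mathrm{worst}(P_i,W)\succeq_i\mathrm{worst}(P_i,W')$. $F$ is weakly viable if for every $a\in A$ there is a profile $P$ with $a\in F(P)$. $F$ is reducible if there is a partition $A=B\uplus C$ and social choice functions $G:\mathcal{P}(V,B)\to B$, $H:\mathcal{P}(V,C)\to C$ such that $F(P)=\{G(P|_B),H(P|_C)\}$ for all $P$; irreducible means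 not reducible. For a linear order $L$ on $A$ and $X,Y\in S_2(A)$, write $X\succeq^O Y$ iff $\mathrm{best}(L,X)\succeq\mathrm{best}(L,Y)$ and $X\succeq^P Y$ iff $\mathrm{worst}(L,X)\succeq\mathrm{worst}(L,Y)$ (comparisons in $L$). A favourite committee of $L$ in a set $\mathcal{X}\subseteq S_2(A)$ is an element of $\mathcal{X}$ that is maximal in $\mathcal{X}$ with respect to both $\succeq^O$ and $\succeq^P$ (for SPO and SPP rules it exists and is unique in the range of $F$). *)

(* Defs.v *)
From mathcomp Require Import all_boot.
Set Implicit Arguments. Unset Strict Implicit. Unset Printing Implicit Defensive.

(* A linear order on T, given by its weak part [r x y] meaning "x is weakly
   preferred to y" (x ⪰ y). *)
Definition is_linear (T : Type) (r : rel T) : Prop :=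
  [/\ reflexive r, antisymmetric r, transitive r & total r].

Record lorder (T : Type) := LOrder { lrel :> rel T; lrel_lin : is_linear lrel }.

Definition profile (V T : Type) := V -> lorder T.

Definition update (V : eqType) (T : Type) (P : profile V T) (i : V) (L : lorder T)
  : profile V T := fun j => if j == i then L else P j.

Definition sub_of (A : finType) (B : {set A}) := {x : A | x \in B}.

Lemma restr_lin (A : finType) (B : {set A}) (L : lorder A) :
  is_linear (fun x y : sub_of B => L (val x) (val y)).
Proof.
case: L => r [rr ra rt rto]; split.
- by move=> x; apply: rr.
- by move=> x y /ra/val_inj.
- by move=> x y z; apply: rt.
- by move=> x y; apply: rto.
Qed.

Definition restr_order (A : finType) (B : {set A}) (L : lorder A) : lorder (sub_of B) :=
  LOrder (restr_lin B L).

Definition restr (V A : finType) (P : profile V A) (B : {set A}) : profile V (sub_of B) :=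
  fun i => restr_order B (P i).

Definition is_best (A : finType) (L : lorder A) (W : {set A}) (x : A) : Prop :=
  x \in W /\ forall y, y \in W -> L x y.
Definition is_worst (A : finType) (L : lorder A) (W : {set A}) (x : A) : Prop :=
  x \in W /\ forall y, y \in W -> L y x.

Definition geO (A : finType) (L : lorder A) (X Y : {set A}) : Prop :=
  forall b b', is_best L X b -> is_best L Y b' -> L b b'.
Definition geP (A : finType) (L : lorder A) (X Y : {set A}) : Prop :=
  forall w w', is_worst L X w -> is_worst L Y w' -> L w w'.

Section Rules.
Variables (V A : finType).
Implicit Type F : profile V A -> {set A}.

Definition SPO F : Prop :=
  forall (P : profile V A) (i : V) (L : lorder A), geO (P i) (F P) (F (update P i L)).

Definition SPP F : Prop :=
  forall (P : profile V A) (i : V) (L : lorder A), geP (P i) (F P) (F (update P i L)).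

Definition weakly_viable F : Prop := forall a : A, exists P, a \in F P.

Definition reducible F : Prop :=
  exists (B C : {set A}),
    [/\ [disjoint B & C], B :|: C = setT &
     exists (G : profile V (sub_of B) -> sub_of B) (H : profile V (sub_of C) -> sub_of C),
       forall P, F P = [set val (G (restr P B)); val (H (restr P C))]].

Definition irreducible F : Prop := ~ reducible F.

Definition in_range F (X : {set A}) : Prop := exists P, F P = X.

Definition favourite_in_range (L : lorder A) F (X : {set A}) : Prop :=
  in_range F X /\ forall Y, in_range F Y -> geO L X Y /\ geP L X Y.

Definition range_dictator F : Prop :=
  exists i : V, forall P : profile V A, favourite_in_range (P i) F (F P).
End Rules.

(* Main.v *)
Require Import Defs.
From mathcomp Require Import all_boot zify.
From Stdlib Require Import Classical ClassicalEpsilon FunctionalExtensionality ProofIrrelevance.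
Set Implicit Arguments. Unset Strict Implicit. Unset Printing Implicit Defensive.
Lemma lrefl (T : Type) (L : lorder T) x : L x x.
Proof. by case: L => r [rr ? ? ?]; apply: rr. Qed.
Lemma ltrans (T : Type) (L : lorder T) x y z : L x y -> L y z -> L x z.
Proof. by case: L => r [? ? rt ?] /= h1 h2; apply: rt h1 h2. Qed.
Lemma lanti (T : Type) (L : lorder T) x y : L x y -> L y x -> x = y.
Proof. by case: L => r [? ra ? ?] /= h1 h2; apply: ra; rewrite h1 h2. Qed.
Lemma ltot (T : Type) (L : lorder T) x y : L x y || L y x.
Proof. by case: L => r [? ? ? rt] /=; apply: rt. Qed.
Lemma lnot (T : Type) (L : lorder T) x y : ~~ L x y -> L y x.
Proof. by move=> h; move: (ltot L x y); rewrite (negbTE h). Qed.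

Definition rk (A : finType) (L : lorder A) (x : A) : nat := #|[set y | L y x]|.

Lemma rk_le (A : finType) (L : lorder A) x y : L x y = (rk L x <= rk L y).
Proof.
apply/idP/idP.
- move=> h; apply: subset_leq_card; apply/subsetP => z; rewrite !inE => hz.
  exact: ltrans hz h.
- apply: contraLR => h; rewrite -ltnNge; apply: proper_card.
  apply/properP; split.
  + apply/subsetP => z; rewrite !inE => hz; exact: ltrans hz (lnot h).
  + by exists x; rewrite !inE ?lrefl.
Qed.

Lemma rk_inj (A : finType) (L : lorder A) : injective (rk L).
Proof.
move=> x y e; apply: (lanti (L:=L)); rewrite rk_le e //.
Qed.

Lemma rk_gt0 (A : finType) (L : lorder A) x : 0 < rk L x.
Proof. by apply/card_gt0P; exists x; rewrite inE lrefl. Qed.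

Lemma rk_le_card (A : finType) (L : lorder A) x : rk L x <= #|A|.
Proof. exact: max_card. Qed.

Lemma rk_neq (A : finType) (L : lorder A) x y : x != y -> rk L x != rk L y.
Proof. by apply: contra => /eqP /rk_inj ->. Qed.

Definition key2 (A : finType) (k : A -> nat) (x : A) : nat :=
  k x * #|A| + enum_rank x.

Lemma key2_lt (A : finType) (k : A -> nat) x y :
  k x < k y -> key2 k x < key2 k y.
Proof.
move=> h; rewrite /key2.
have r1 : (enum_rank x < #|A|)%N by [].
have h3 : (k x).+1 * #|A| <= k y * #|A| by rewrite leq_mul2r h orbT.
rewrite mulSn in h3; lia.
Qed.

Lemma key2_inj (A : finType) (k : A -> nat) x y :
  key2 k x = key2 k y -> x = y.
Proof.
move=> e.
have : (key2 k x) %% #|A| = (key2 k y) %% #|A| by rewrite e.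
rewrite /key2 !modnMDl !modn_small // => /ord_inj; exact: enum_rank_inj.
Qed.

Lemma ord_of_lin (A : finType) (k : A -> nat) :
  is_linear (fun x y : A => key2 k x <= key2 k y).
Proof.
split.
- by move=> x; rewrite leqnn.
- move=> x y /andP [h1 h2]; apply: (key2_inj (k:=k)); apply/eqP; rewrite eqn_leq h1 h2 //.
- by move=> y x z h1 h2; apply: leq_trans h1 h2.
- by move=> x y; apply: leq_total.
Qed.

Definition ord_of (A : finType) (k : A -> nat) : lorder A := LOrder (ord_of_lin k).

Lemma ord_ofE (A : finType) (k : A -> nat) x y :
  ord_of k x y = if x == y then true else (k x < k y) || ((k x == k y) && (key2 k x <= key2 k y)).
Proof.
rewrite /=; case: eqP => [->|ne]; first by rewrite leqnn.
case: (ltngtP (k x) (k y)) => h /=.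
- by apply/ltnW/key2_lt.
- by apply/negbTE; rewrite -ltnNge; apply: key2_lt.
- by [].
Qed.

Definition otop (A : finType) (b : A) (L : lorder A) : lorder A :=
  ord_of (fun x => if x == b then 0 else rk L x).
Definition obot (A : finType) (b : A) (L : lorder A) : lorder A :=
  ord_of (fun x => if x == b then #|A|.+1 else rk L x).
Definition oabove (A : finType) (c a : A) (L : lorder A) : lorder A :=
  ord_of (fun x => if x == c then (rk L a).*2 else (rk L x).*2.+1).
Definition obelow (A : finType) (b a : A) (L : lorder A) : lorder A :=
  ord_of (fun x => if x == b then (rk L a).*2.+2 else (rk L x).*2.+1).
Definition olift (A : finType) (S : {set A}) (L : lorder A) : lorder A :=
  ord_of (fun x => if x \in S then rk L x else rk L x + #|A|).

Lemma ord_of_injE (A : finType) (k : A -> nat) x y :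
  (forall u v, u != v -> k u != k v) -> ord_of k x y = (x == y) || (k x < k y).
Proof.
move=> hk; rewrite ord_ofE; case: (eqVneq x y) => [//|nxy] /=.
by move/negbTE: (hk _ _ nxy) => ->; rewrite andFb orbF.
Qed.

Lemma otop_inj (A : finType) (b : A) (L : lorder A) u v :
  u != v -> (if u == b then 0 else rk L u) != (if v == b then 0 else rk L v).
Proof.
move=> nuv; have := rk_neq L nuv; have := rk_gt0 L u; have := rk_gt0 L v.
case: (eqVneq u b) => [eu|nu]; case: (eqVneq v b) => [ev|nv] /= => *; try lia.
by subst; rewrite eqxx in nuv.
Qed.

Lemma otopE (A : finType) (b : A) L x y :
  otop b L x y = (x == y) || (x == b) || ((y != b) && L x y).
Proof.
rewrite /otop ord_of_injE; last exact: otop_inj.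
case: (eqVneq x y) => [//|nxy] /=.
have := rk_neq L nxy; have := rk_gt0 L x; have := rk_gt0 L y.
rewrite rk_le.
case: (eqVneq x b) => [ex|nx]; case: (eqVneq y b) => [ey|ny] /= => *; try lia.
by subst; rewrite eqxx in nxy.
Qed.

Lemma obotE (A : finType) (b : A) L x y :
  obot b L x y = (x == y) || (y == b) || ((x != b) && L x y).
Proof.
rewrite /obot ord_of_injE; last first.
  move=> u v nuv; have := rk_neq L nuv; have := rk_le_card L u; have := rk_le_card L v.
  case: (eqVneq u b) => [eu|nu]; case: (eqVneq v b) => [ev|nv] /= => *; try lia.
  by subst; rewrite eqxx in nuv.
case: (eqVneq x y) => [//|nxy] /=.
have := rk_neq L nxy; have := rk_le_card L x; have := rk_le_card L y.
rewrite rk_le.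
case: (eqVneq x b) => [ex|nx]; case: (eqVneq y b) => [ey|ny] /= => *; try lia.
by subst; rewrite eqxx in nxy.
Qed.

Lemma oaboveE (A : finType) (c a : A) L x y :
  oabove c a L x y = (x == y) ||
    (if x == c then L a y else if y == c then (x != a) && L x a else L x y).
Proof.
rewrite /oabove ord_of_injE; last first.
  move=> u v nuv; have := rk_neq L nuv.
  case: (eqVneq u c) => [eu|nu]; case: (eqVneq v c) => [ev|nv] /= => *; try lia.
  by subst; rewrite eqxx in nuv.
case: (eqVneq x y) => [//|nxy] /=.
have := rk_neq L nxy; rewrite !rk_le.
case: (eqVneq x c) => [ex|nx]; case: (eqVneq y c) => [ey|ny] /= => *; try lia.
- by subst; rewrite eqxx in nxy.
- case: (eqVneq x a) => [exa|nxa] /=; first by subst; lia.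
  have := rk_neq L nxa; lia.
Qed.

Lemma obelowE (A : finType) (b a : A) L x y :
  obelow b a L x y = (x == y) ||
    (if x == b then (y != a) && L a y else if y == b then L x a else L x y).
Proof.
rewrite /obelow ord_of_injE; last first.
  move=> u v nuv; have := rk_neq L nuv.
  case: (eqVneq u b) => [eu|nu]; case: (eqVneq v b) => [ev|nv] /= => *; try lia.
  by subst; rewrite eqxx in nuv.
case: (eqVneq x y) => [//|nxy] /=.
have := rk_neq L nxy; rewrite !rk_le.
case: (eqVneq x b) => [ex|nx]; case: (eqVneq y b) => [ey|ny] /= => *; try lia.
- by subst; rewrite eqxx in nxy.
- case: (eqVneq y a) => [eya|nya] /=; first by subst; lia.
  have := rk_neq L nya; lia.
Qed.

Lemma oliftE (A : finType) (S : {set A}) L x y :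
  olift S L x y = (x == y) ||
    (if x \in S then (y \notin S) || L x y else (y \notin S) && L x y).
Proof.
rewrite /olift ord_of_injE; last first.
  move=> u v nuv; have := rk_neq L nuv; have := rk_le_card L u; have := rk_le_card L v.
  have := rk_gt0 L u; have := rk_gt0 L v.
  by case: (u \in S); case: (v \in S) => /= *; lia.
case: (eqVneq x y) => [//|nxy] /=.
have := rk_neq L nxy; have := rk_le_card L x; have := rk_le_card L y.
have := rk_gt0 L x; have := rk_gt0 L y.
rewrite !rk_le.
by case: (x \in S); case: (y \in S) => /= *; lia.
Qed.

Lemma otop_oth (A : finType) (b : A) L x y : x != b -> y != b -> otop b L x y = L x y.
Proof.
move=> hx hy; rewrite otopE (negbTE hx) hy /=.
by case: eqP => // ->; rewrite lrefl.
Qed.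
Lemma otop_bl (A : finType) (b : A) L y : otop b L b y.
Proof. by rewrite otopE eqxx orbT. Qed.
Lemma otop_br (A : finType) (b : A) L x : x != b -> otop b L x b = false.
Proof. by move=> hx; rewrite otopE (negbTE hx) eqxx /=. Qed.
Lemma obot_oth (A : finType) (b : A) L x y : x != b -> y != b -> obot b L x y = L x y.
Proof.
move=> hx hy; rewrite obotE (negbTE hy) hx /=.
by case: eqP => // ->; rewrite lrefl.
Qed.
Lemma obot_br (A : finType) (b : A) L x : obot b L x b.
Proof. by rewrite obotE eqxx orbT. Qed.
Lemma obot_bl (A : finType) (b : A) L y : y != b -> obot b L b y = false.
Proof. by move=> hy; rewrite obotE (negbTE hy) eqxx /=; case: eqP => // e; rewrite e eqxx in hy. Qed.
Lemma oabove_oth (A : finType) (c a : A) L x y : x != c -> y != c -> oabove c a L x y = L x y.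
Proof.
move=> hx hy; rewrite oaboveE (negbTE hx) (negbTE hy) /=.
by case: eqP => // ->; rewrite lrefl.
Qed.
Lemma obelow_oth (A : finType) (b a : A) L x y : x != b -> y != b -> obelow b a L x y = L x y.
Proof.
move=> hx hy; rewrite obelowE (negbTE hx) (negbTE hy) /=.
by case: eqP => // ->; rewrite lrefl.
Qed.

Definition L0 (A : finType) : lorder A := ord_of (fun _ : A => 0).

Lemma arrow_extremal (V A : finType) (C : {set A}) (rel : profile V A -> A -> A -> bool)
  (hanti : forall (P : profile V A) x y, x \in C -> y \in C -> x != y -> rel P x y = ~~ rel P y x)
  (htrans : forall (P : profile V A) x y z, x \in C -> y \in C -> z \in C -> x != y -> y != z -> x != z ->
       rel P x y -> rel P y z -> rel P x z)
  (hpar : forall (P : profile V A) x y, x \in C -> y \in C -> x != y -> (forall j, P j x y) -> rel P x y)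
  (hiia : forall (P Q : profile V A) x y, x \in C -> y \in C -> x != y ->
       (forall j, P j x y = Q j x y) -> rel P x y = rel Q x y)
  (P : profile V A) b a c :
  b \in C -> a \in C -> c \in C -> a != b -> c != b -> a != c ->
  (forall j, (forall e, e \in C -> e != b -> P j b e) \/ (forall e, e \in C -> e != b -> P j e b)) ->
  rel P a b -> rel P b c -> False.
Proof.
move=> bC aC cC nab ncb nac hext hab hbc.
have nca : c != a by rewrite eq_sym.
have nbc : b != c by rewrite eq_sym.
have nba : b != a by rewrite eq_sym.
pose Q : profile V A := fun j => if P j a c then oabove c a (P j) else P j.
have e1 : rel Q a b = rel P a b.
  apply: hiia => // j; rewrite /Q; case: ifP => // _.
  by rewrite oabove_oth.
have e2 : rel Q b c = rel P b c.
  apply: hiia => // j; rewrite /Q; case: ifP => // _.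
  rewrite oaboveE (negbTE nbc) eqxx nba /=.
  case: (hext j) => h.
  - by rewrite !h.
  - apply/idP/idP => h'.
    + by move: nba; rewrite (lanti h' (h a aC nab)) eqxx.
    + by move: nbc; rewrite (lanti h' (h c cC ncb)) eqxx.
have e3 : rel Q c a.
  apply: hpar => // j; rewrite /Q; case: ifP => h.
  - by rewrite oaboveE eqxx lrefl orbT.
  - by apply: lnot; rewrite h.
have : rel Q a c by apply: (htrans _ a b c) => //; rewrite ?e1 ?e2.
by rewrite hanti // e3.
Qed.

Definition pk (V A : finType) (b : A) (k : nat) : profile V A :=
  fun j => if index j (enum V) < k then otop b (L0 A) else obot b (L0 A).
Arguments pk V {A} b k.

Lemma arrow_pivot (V A : finType) (C : {set A}) (rel : profile V A -> A -> A -> bool)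
  (hanti : forall (P : profile V A) x y, x \in C -> y \in C -> x != y -> rel P x y = ~~ rel P y x)
  (htrans : forall (P : profile V A) x y z, x \in C -> y \in C -> z \in C -> x != y -> y != z -> x != z ->
       rel P x y -> rel P y z -> rel P x z)
  (hpar : forall (P : profile V A) x y, x \in C -> y \in C -> x != y -> (forall j, P j x y) -> rel P x y)
  (hiia : forall (P Q : profile V A) x y, x \in C -> y \in C -> x != y ->
       (forall j, P j x y = Q j x y) -> rel P x y = rel Q x y)
  b : b \in C -> (exists a, a \in C /\ a != b) ->
  exists d (P1 P2 : profile V A),
   [/\ (forall j, j != d -> P1 j = P2 j),
       (forall a, a \in C -> a != b -> rel P1 a b /\ ~~ rel P2 a b) &
       (forall P a c, a \in C -> c \in C -> a != b -> c != b -> a != c -> rel P a c = P d a c)].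
Proof.
move=> bC [a0 [a0C na0b]].
pose stop k := [forall c in C, (c != b) ==> rel (pk V b k) b c].
have hext : forall (k : nat) (j : V), (forall e, e \in C -> e != b -> pk V b k j b e) \/
                        (forall e, e \in C -> e != b -> pk V b k j e b).
  move=> k j; rewrite /pk; case: (index j (enum V) < k); [left|right] => e _ _;
    [exact: otop_bl | exact: obot_br].
have stopn : stop #|V|.
  apply/forall_inP => c cC; apply/implyP => ncb; apply: hpar => // [|j].
    by rewrite eq_sym.
  by rewrite /pk cardE index_mem mem_enum otop_bl.
have exs : exists k, stop k by exists #|V|.
case: (ex_minnP exs) => k hk hmin.
have kn : k <= #|V| by apply: hmin.
have k0 : 0 < k.
  rewrite lt0n; apply/eqP => k0; move: hk; rewrite k0 => /forall_inP /(_ a0 a0C) /implyP /(_ na0b).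
  rewrite hanti //; last by rewrite eq_sym.
  by rewrite hpar // => j; rewrite /pk ltn0 obot_br.
set m := k.-1.
have km : k = m.+1 by rewrite /m prednK.
have nstop : ~~ stop m.
  by apply/negP => /hmin; rewrite km ltnn.
have bot : forall a, a \in C -> a != b -> rel (pk V b m) a b.
  move: nstop; rewrite negb_forall_in => /exists_inP [c0 c0C].
  rewrite negb_imply => /andP [nc0b hc0].
  have h0 : rel (pk V b m) c0 b by rewrite hanti // eq_sym.
  move=> a aC nab; case: (eqVneq a c0) => [-> //|nac0].
  rewrite hanti // ?(eq_sym b); apply/negP => hba.
  have nc0a : c0 != a by rewrite eq_sym.
  exact: (arrow_extremal hanti htrans hpar hiia bC c0C aC nc0b nab nc0a (hext m) h0 hba).
have V0 : 0 < #|V| by apply: leq_trans kn.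
case/card_gt0P: V0 => x0 _.
have mlt : m < size (enum V) by rewrite -cardE -km.
set d := nth x0 (enum V) m.
have idd : index d (enum V) = m by rewrite index_uniq ?enum_uniq.
have idx : forall j, j != d -> (index j (enum V) < k) = (index j (enum V) < m).
  move=> j njd; rewrite km ltnS leq_eqVlt; case: eqP => // e.
  by move: njd; rewrite /d -e nth_index ?mem_enum ?eqxx.
exists d, (pk V b m), (pk V b k); split.
- by move=> j njd; rewrite /pk idx.
- move=> a aC nab; split; first exact: bot.
  move/forall_inP: hk => /(_ a aC) /implyP /(_ nab).
  by rewrite hanti // ?(eq_sym b).
- move=> P a c aC cC nab ncb nac.
  have key : forall a c, a \in C -> c \in C -> a != b -> c != b -> a != c ->
               P d a c -> rel P a c.
    move=> {}a {}c {}aC {}cC {}nab {}ncb {}nac hd.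
    have nba : b != a by rewrite eq_sym.
    have nbc : b != c by rewrite eq_sym.
    pose Q : profile V A := fun j => if index j (enum V) < m then otop b (P j)
                          else if j == d then obelow b a (P j) else obot b (P j).
    have e1 : rel Q a b = rel (pk V b m) a b.
      apply: hiia => // j; rewrite /Q /pk; case: ifP => _.
        by rewrite !otop_br.
      case: eqP => _; last by rewrite !obot_br.
      by rewrite obelowE (negbTE nab) eqxx lrefl orbT obot_br.
    have e2 : rel Q b c = rel (pk V b k) b c.
      apply: hiia => // j; rewrite /Q /pk; case: (eqVneq j d) => [->|njd].
        have nca : c != a by rewrite eq_sym.
        by rewrite idd ltnn km ltnSn otop_bl obelowE eqxx (negbTE nbc) hd nca.
      rewrite idx //; case: ifP => _; first by rewrite !otop_bl.
      by rewrite !obot_bl.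
    have : rel Q a c.
      apply: (htrans _ a b c) => //; first by rewrite e1 bot.
      by rewrite e2; move/forall_inP: hk => /(_ c cC) /implyP /(_ ncb).
    rewrite (hiia _ P) // => j; rewrite /Q; case: ifP => _; first by rewrite otop_oth.
    by case: ifP => _; rewrite ?obelow_oth ?obot_oth.
  case hd: (P d a c); first by apply: key.
  have nca : c != a by rewrite eq_sym.
  have hca : P d c a by apply: lnot; rewrite hd.
  by rewrite hanti // (key c a).
Qed.

Lemma arrow (V A : finType) (C : {set A}) (rel : profile V A -> A -> A -> bool)
  (hanti : forall (P : profile V A) x y, x \in C -> y \in C -> x != y -> rel P x y = ~~ rel P y x)
  (htrans : forall (P : profile V A) x y z, x \in C -> y \in C -> z \in C -> x != y -> y != z -> x != z ->
       rel P x y -> rel P y z -> rel P x z)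
  (hpar : forall (P : profile V A) x y, x \in C -> y \in C -> x != y -> (forall j, P j x y) -> rel P x y)
  (hiia : forall (P Q : profile V A) x y, x \in C -> y \in C -> x != y ->
       (forall j, P j x y = Q j x y) -> rel P x y = rel Q x y) :
  2 < #|C| ->
  exists d, forall (P : profile V A) x y, x \in C -> y \in C -> x != y -> rel P x y = P d x y.
Proof.
move=> C3.
have other : forall u v, exists w, [/\ w \in C, w != u & w != v].
  move=> u v; have : 0 < #|C :\: [set u; v]|.
    rewrite cardsD.
    have h1 := subset_leq_card (subsetIr C [set u; v]).
    have h2 : #|[set u; v]| <= 2 by rewrite cards2; case: (u != v).
    lia.
  case/card_gt0P => w; rewrite !inE negb_or => /andP [/andP [nwu nwv] wC].
  by exists w.
have [b bC] : exists b, b \in C.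
  by apply/card_gt0P; apply: leq_trans C3.
have [a [aC nab _]] := other b b.
have [d [P1 [P2 [hfl1 hfl2 hdict]]]] :=
  arrow_pivot hanti htrans hpar hiia bC (ex_intro _ a (conj aC nab)).
have same : forall c, c \in C -> c != b -> forall dc,
   (forall P a c', a \in C -> c' \in C -> a != c -> c' != c -> a != c' -> rel P a c' = P dc a c') ->
   dc = d.
  move=> c cC ncb dc hdc; apply/eqP/negP => /negP ndc.
  have [a' [a'C na'b na'c]] := other b c.
  have nbc : b != c by rewrite eq_sym.
  have [h1 h2] := hfl2 a' a'C na'b.
  move: h1 h2; rewrite (hdc P1 a' b) // (hdc P2 a' b) // hfl1 //.
  by move=> ->.
exists d => P x y xC yC nxy.
case: (boolP ((x != b) && (y != b))) => [/andP [nxb nyb]|hb]; first exact: hdict.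
have [c [cC ncx ncy]] := other x y.
have ncb : c != b.
  by move: hb; rewrite negb_and !negbK => /orP [] /eqP <-.
have nbc : b != c by rewrite eq_sym.
have [dc [Q1 [Q2 [_ _ hdc]]]] :=
  arrow_pivot hanti htrans hpar hiia cC (ex_intro _ b (conj bC nbc)).
have edc := same c cC ncb dc hdc.
by rewrite -edc hdc // eq_sym.
Qed.

Definition geO' (A : finType) (L : lorder A) (X Y : {set A}) : Prop :=
  forall y, y \in Y -> exists2 x, x \in X & L x y.
Definition geP' (A : finType) (L : lorder A) (X Y : {set A}) : Prop :=
  exists2 y, y \in Y & forall x, x \in X -> L x y.
Definition dom (A : finType) (L : lorder A) (X Y : {set A}) : Prop := geO' L X Y /\ geP' L X Y.

Lemma geO2 (A : finType) (L : lorder A) x1 x2 y1 y2 :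
  geO' L [set x1; x2] [set y1; y2] <-> ((L x1 y1 \/ L x2 y1) /\ (L x1 y2 \/ L x2 y2)).
Proof.
split.
- move=> h; have [u] := h y1 (set21 _ _); have [v] := h y2 (set22 _ _).
  by rewrite !inE => /orP [] /eqP -> hv /orP [] /eqP -> hu; auto.
- move=> [h1 h2] y; rewrite !inE => /orP [] /eqP ->.
  + by case: h1 => h; [exists x1 | exists x2]; rewrite ?inE ?eqxx ?orbT.
  + by case: h2 => h; [exists x1 | exists x2]; rewrite ?inE ?eqxx ?orbT.
Qed.

Lemma geP2 (A : finType) (L : lorder A) x1 x2 y1 y2 :
  geP' L [set x1; x2] [set y1; y2] <-> ((L x1 y1 /\ L x2 y1) \/ (L x1 y2 /\ L x2 y2)).
Proof.
split.
- move=> [y]; rewrite !inE => /orP [] /eqP -> h.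
  + by left; split; apply: h; rewrite !inE eqxx ?orbT.
  + by right; split; apply: h; rewrite !inE eqxx ?orbT.
- move=> [[h1 h2]|[h1 h2]]; [exists y1 | exists y2]; rewrite ?inE ?eqxx ?orbT //;
  by move=> x; rewrite !inE => /orP [] /eqP ->.
Qed.

Lemma dom2 (A : finType) (L : lorder A) x1 x2 y1 y2 :
  dom L [set x1; x2] [set y1; y2] <->
  (((L x1 y1 \/ L x2 y1) /\ (L x1 y2 \/ L x2 y2)) /\
   ((L x1 y1 /\ L x2 y1) \/ (L x1 y2 /\ L x2 y2))).
Proof. by rewrite /dom geO2 geP2. Qed.

Lemma pairP (A : finType) (X : {set A}) : #|X| = 2 -> exists x1 x2, x1 != x2 /\ X = [set x1; x2].
Proof. by move/eqP/cards2P. Qed.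

Lemma dom_antisym (A : finType) (L : lorder A) (X Y : {set A}) :
  #|X| = 2 -> #|Y| = 2 -> dom L X Y -> dom L Y X -> X = Y.
Proof.
move=> /pairP [x1 [x2 [nx ->]]] /pairP [y1 [y2 [ny ->]]].
rewrite !dom2 !rk_le => h1 h2.
have := rk_neq L nx; have := rk_neq L ny.
have [[e1 e2]|[e1 e2]] : (rk L x1 = rk L y1 /\ rk L x2 = rk L y2) \/
                      (rk L x1 = rk L y2 /\ rk L x2 = rk L y1) by lia.
- by rewrite (rk_inj e1) (rk_inj e2).
- by rewrite (rk_inj e1) (rk_inj e2) setUC.
Qed.

Lemma dom_trans (A : finType) (L : lorder A) (X Y Z : {set A}) : dom L X Y -> dom L Y Z -> dom L X Z.
Proof.
move=> [o1 [y1 y1Y p1]] [o2 [z1 z1Z p2]]; split.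
- move=> z zZ; have [y yY hy] := o2 z zZ; have [x xX hx] := o1 y yY.
  by exists x => //; apply: ltrans hx hy.
- by exists z1 => // x xX; apply: ltrans (p1 x xX) (p2 y1 y1Y).
Qed.

Lemma dom_refl (A : finType) (L : lorder A) (X : {set A}) : X != set0 -> dom L X X.
Proof.
move=> /set0Pn [x0 x0X]; split; first by move=> y yY; exists y => //; apply: lrefl.
pose m := [arg max_(y > x0 in X) rk L y].
exists m; first by rewrite /m; case: arg_maxnP.
move=> x xX; rewrite rk_le /m; case: arg_maxnP => // i _; apply.
exact: xX.
Qed.

Lemma pair_of (A : finType) (X : {set A}) a b :
  #|X| = 2 -> a \in X -> b \in X -> a != b -> X = [set a; b].
Proof.
move=> cX aX bX nab; apply/eqP; rewrite eq_sym eqEcard cX cards2 nab andbT.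
by apply/subsetP => x; rewrite !inE => /orP [] /eqP ->.
Qed.

Lemma other_of (A : finType) (X : {set A}) a :
  #|X| = 2 -> a \in X -> exists2 b, b \in X & b != a.
Proof.
move=> /pairP [x1 [x2 [nx ->]]]; rewrite !inE => /orP [] /eqP ->.
- by exists x2; rewrite ?inE ?eqxx ?orbT // eq_sym.
- by exists x1; rewrite ?inE ?eqxx.
Qed.

Lemma worst_ex (A : finType) (L : lorder A) (X : {set A}) :
  X != set0 -> exists2 m, m \in X & forall x, x \in X -> L x m.
Proof.
move=> /set0Pn [x0 x0X].
pose m := [arg max_(y > x0 in X) rk L y].
exists m; first by rewrite /m; case: arg_maxnP.
move=> x xX; rewrite rk_le /m; case: arg_maxnP => // i _; apply.
exact: xX.
Qed.

Lemma best_ex (A : finType) (L : lorder A) (X : {set A}) :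
  X != set0 -> exists2 m, m \in X & forall x, x \in X -> L m x.
Proof.
move=> /set0Pn [x0 x0X].
pose m := [arg min_(y < x0 in X) rk L y].
exists m; first by rewrite /m; case: arg_minnP.
move=> x xX; rewrite rk_le /m; case: arg_minnP => // i _; apply.
exact: xX.
Qed.

Lemma card2_n0 (A : finType) (X : {set A}) : #|X| = 2 -> X != set0.
Proof. by move=> h; apply/set0Pn/card_gt0P; rewrite h. Qed.

Lemma dom_transfer (A : finType) (L L' : lorder A) (X Y : {set A}) :
  #|X| = 2 -> #|Y| = 2 ->
  (forall x w, x \in X -> w \notin X -> L x w -> L' x w) ->
  dom L X Y -> dom L' X Y.
Proof.
move=> cX cY hc [o [y0 y0Y p]]; split.
  move=> y yY; have [x xX hx] := o y yY.
  case: (boolP (y \in X)) => yX; first by exists y => //; apply: lrefl.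
  by exists x => //; apply: hc.
case: (boolP (y0 \in X)) => y0X; last by exists y0 => // x xX; apply: hc => //; apply: p.
have [m mX hm] := worst_ex L' (card2_n0 cX).
case: (eqVneq m y0) => [e|nmy0]; first by exists y0 => //; rewrite -e.
case: (boolP (m \in Y)) => mY; first by exists m.
have [y1 y1Y ny1] := other_of cY y0Y.
have ny0m : y0 != m by rewrite eq_sym.
have eX := pair_of cX y0X mX ny0m.
have y1m : y1 != m by apply/eqP => e; rewrite -e y1Y in mY.
have y1X : y1 \notin X by rewrite eX !inE negb_or ny1 y1m.
have hmy1 : L m y1.
  have [x xX hx] := o y1 y1Y; move: xX; rewrite eX !inE => /orP [] /eqP ex; subst x => //.
  exact: ltrans (p m mX) hx.
have h' := hc m y1 mX y1X hmy1.
exists y1 => // x; rewrite eX !inE => /orP [] /eqP -> //.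
exact: ltrans (hm y0 y0X) h'.
Qed.

Definition good (V A : finType) (F : profile V A -> {set A}) : Prop :=
  [/\ forall P, #|F P| = 2, SPO F, SPP F & weakly_viable F].

Lemma update_same (V : eqType) (T : Type) (P : profile V T) i : update P i (P i) = P.
Proof. by apply: functional_extensionality => j; rewrite /update; case: eqP => // ->. Qed.

Lemma update_upd (V : eqType) (T : Type) (P : profile V T) i L L' :
  update (update P i L) i L' = update P i L'.
Proof. by apply: functional_extensionality => j; rewrite /update; case: eqP. Qed.

Lemma update_at (V : eqType) (T : Type) (P : profile V T) i L : update P i L i = L.
Proof. by rewrite /update eqxx. Qed.

Lemma update_oth (V : eqType) (T : Type) (P : profile V T) i L j : j != i -> update P i L j = P j.
Proof. by rewrite /update => /negbTE ->. Qed.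

Lemma chain (V A : finType) (Inv : profile V A -> Prop) (P Q : profile V A) :
  Inv Q -> (forall (M : profile V A) i, Inv M -> M i = Q i -> Inv (update M i (P i))) -> Inv P.
Proof.
move=> h0 hs.
have : forall s : seq V, uniq s -> Inv (fun j => if j \in s then P j else Q j).
  elim => [|i s IH] /=.
    by move=> _; have -> : (fun j : V => if j \in [::] then P j else Q j) = Q
      by apply: functional_extensionality.
  move=> /andP [nis us].
  have := hs _ i (IH us); rewrite (negbTE nis) => /(_ erefl).
  have -> // : update (fun j => if j \in s then P j else Q j) i (P i) =
            (fun j => if j \in i :: s then P j else Q j).
  apply: functional_extensionality => j; rewrite /update in_cons.
  by case: eqP => [->|].
move=> /(_ (enum V) (enum_uniq _)).
have -> // : (fun j => if j \in enum V then P j else Q j) = P.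
by apply: functional_extensionality => j; rewrite mem_enum.
Qed.

Lemma sp_dom (V A : finType) (F : profile V A -> {set A}) P i L :
  good F -> dom (P i) (F P) (F (update P i L)).
Proof.
case=> c2 spo spp _.
have [bX bXX hbX] := best_ex (P i) (card2_n0 (c2 P)).
have [bY bYY hbY] := best_ex (P i) (card2_n0 (c2 (update P i L))).
have [wX wXX hwX] := worst_ex (P i) (card2_n0 (c2 P)).
have [wY wYY hwY] := worst_ex (P i) (card2_n0 (c2 (update P i L))).
have h1 := spo P i L bX bY (conj bXX hbX) (conj bYY hbY).
have h2 := spp P i L wX wY (conj wXX hwX) (conj wYY hwY).
split.
- by move=> y yY; exists bX => //; apply: ltrans h1 (hbY y yY).
- by exists wY => // x xX; apply: ltrans (hwX x xX) h2.
Qed.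

Lemma sp_dom' (V A : finType) (F : profile V A -> {set A}) (M : profile V A) i L :
  good F -> dom L (F (update M i L)) (F M).
Proof.
move=> hF; have := sp_dom (update M i L) i (M i) hF.
by rewrite update_at update_upd update_same.
Qed.

Lemma mon (V A : finType) (F : profile V A -> {set A}) (P P' : profile V A) :
  good F -> (forall j x w, x \in F P -> w \notin F P -> P j x w -> P' j x w) -> F P' = F P.
Proof.
move=> hF hc; have c2 : forall Q, #|F Q| = 2 by case: hF.
apply: (chain (Inv := fun M => F M = F P)) => // M i hM hMi.
pose M' := update M i (P' i).
have d1 : dom (P i) (F M) (F M') by rewrite -hMi; exact: (sp_dom M i (P' i) hF).
have d2 : dom (P' i) (F M) (F M').
  apply: (dom_transfer (c2 _) (c2 _) _ d1).
  by move=> x w; rewrite hM => xX wX; apply: hc.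
have d3 : dom (P' i) (F M') (F M) by apply: sp_dom'.
by rewrite -hM; apply: dom_antisym d3 d2.
Qed.

Lemma ne_lem (V A : finType) (F : profile V A -> {set A}) (P : profile V A) i L c :
  good F -> c \notin F P -> (forall x, x \in F P -> P i c x) -> c \notin F (update P i L).
Proof.
move=> hF cn hc; apply/negP => cin.
have [[o _] _] := (sp_dom P i L hF, 0).
have [x xX hx] := o c cin.
by move: cn; rewrite -(lanti hx (hc x xX)) xX.
Qed.

Definition in_range' (V A : finType) (F : profile V A -> {set A}) (X : {set A}) : Prop :=
  exists P, F P = X.

Lemma topseg (V A : finType) (F : profile V A -> {set A}) (P : profile V A) (S : {set A}) :
  good F -> (exists Q, F Q \subset S) -> (forall j u w, u \in S -> w \notin S -> P j u w) ->
  F P \subset S.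
Proof.
move=> hF [Q hQ] hS.
apply: (chain (Inv := fun M => F M \subset S) (Q := Q)) => // M i hM _.
have [_ [y yM hy]] := sp_dom' M i (P i) hF.
apply/subsetP => x xM'; case: (boolP (x \in S)) => // xS.
have yS : y \in S by apply: (subsetP hM).
have e := lanti (hy x xM') (hS i y x yS xS).
by move: xS; rewrite e yS.
Qed.

Lemma topu (V A : finType) (F : profile V A -> {set A}) (P : profile V A) z :
  good F -> (forall j w, P j z w) -> z \in F P.
Proof.
move=> hF hz; have [_ _ _ wv] := hF.
have [Q hQ] := wv z.
apply: (chain (Inv := fun M => z \in F M) (Q := Q)) => // M i hM _.
have [o _] := sp_dom' M i (P i) hF.
have [x xM' hx] := o z hM.
by rewrite -(lanti hx (hz i x)).
Qed.

Lemma top2 (V A : finType) (F : profile V A -> {set A}) (P : profile V A) z x :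
  good F -> in_range' F [set z; x] ->
  (forall j w, w != z -> w != x -> P j z w && P j x w) -> F P = [set z; x].
Proof.
move=> hF [Q hQ] hzx; have [c2 _ _ _] := hF.
have sub : F P \subset [set z; x].
  apply: topseg => //; first by exists Q; rewrite hQ.
  move=> j u w; rewrite !inE negb_or => /orP [] /eqP -> /andP [h1 h2];
  by have /andP [] := hzx j w h1 h2.
apply/eqP; rewrite eqEcard sub /= (c2 P).
by rewrite -(c2 Q) hQ.
Qed.

Lemma una (V A : finType) (F : profile V A -> {set A}) L (Y : {set A}) :
  good F -> in_range' F Y -> dom L (F (fun _ => L)) Y.
Proof.
move=> hF [Q <-]; have [c2 _ _ _] := hF.
apply: (chain (Inv := fun M => dom L (F M) (F Q)) (Q := Q)).
  by apply: dom_refl; apply: card2_n0.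
move=> M i hM _; exact: dom_trans (sp_dom' M i L hF) hM.
Qed.

Definition adj (V A : finType) (F : profile V A -> {set A}) (x y : A) : Prop :=
  x != y /\ in_range' F [set x; y].

Lemma adj_sym (V A : finType) (F : profile V A -> {set A}) x y : adj F x y -> adj F y x.
Proof. by case=> n [P e]; split; [rewrite eq_sym | exists P; rewrite setUC]. Qed.

Lemma adj_of (V A : finType) (F : profile V A -> {set A}) (P : profile V A) x y :
  good F -> x \in F P -> y \in F P -> x != y -> adj F x y.
Proof.
move=> [c2 _ _ _] xP yP nxy; split => //; exists P.
exact: pair_of.
Qed.

Definition prof0 (V A : finType) : profile V A := fun _ => L0 A.

Lemma nadj_trans (V A : finType) (F : profile V A -> {set A}) t x y :
  good F -> x != t -> y != t -> ~ adj F t x -> ~ adj F t y -> ~ adj F x y.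
Proof.
move=> hF nxt nyt ntx nty hxy.
have [c2 _ _ wv] := hF.
pose L := otop t (olift [set x; y] (L0 A)).
pose U : profile V A := fun _ => L.
have [Q tQ] := wv t.
have [o1 _] := una L hF (ex_intro _ Q erefl).
have [u uU hu] := o1 t tQ.
have ut : u = t by apply: (lanti hu); rewrite /L otop_bl.
subst u.
have [s sU nst] := other_of (c2 U) uU.
have [_ [w wxy hw]] := una L hF (proj2 hxy).
have hs := hw s sU.
have sxy : s \in [set x; y].
  apply/negPn/negP => sn.
  have nwt : w != t by move: wxy; rewrite !inE => /orP [] /eqP ->.
  have nsw : s != w by apply/eqP => e; move: sn; rewrite e wxy.
  by move: hs; rewrite /L otopE (negbTE nst) (negbTE nsw) nwt oliftE (negbTE nsw) (negbTE sn) wxy.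
have : adj F t s.
  by apply: (adj_of (P := U)) => //; rewrite eq_sym.
by move: sxy; rewrite !inE => /orP [] /eqP ->.
Qed.

Definition pb (P : Prop) : bool := if excluded_middle_informative P then true else false.
Lemma pbP (P : Prop) : reflect P (pb P).
Proof. by rewrite /pb; case: excluded_middle_informative => h; constructor. Qed.

Definition indep (V A : finType) (F : profile V A -> {set A}) (B : {set A}) : Prop :=
  forall x y, x \in B -> y \in B -> ~ adj F x y.

Definition gB (V A : finType) (F : profile V A -> {set A}) (a0 : A) (B : {set A}) (P : profile V A) : A :=
  odflt a0 [pick x in F P :&: B].

Lemma gB_spec (V A : finType) (F : profile V A -> {set A}) a0 (B : {set A}) (P : profile V A) :
  good F -> indep F (~: B) -> gB F a0 B P \in F P /\ gB F a0 B P \in B.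
Proof.
move=> hF hC; have [c2 _ _ _] := hF.
have [u [v [nuv e]]] := pairP (c2 P).
have : exists2 x, x \in F P & x \in B.
  case: (boolP (u \in B)) => uB; first by exists u => //; rewrite e set21.
  case: (boolP (v \in B)) => vB; first by exists v => //; rewrite e set22.
  exfalso; apply: (hC u v); rewrite ?inE //.
  by apply: (adj_of (P := P)) => //; rewrite e ?set21 ?set22.
move=> [x xP xB]; rewrite /gB; case: pickP => [y|].
  by rewrite !inE => /andP [].
by move/(_ x); rewrite !inE xP xB.
Qed.

Lemma F_split (V A : finType) (F : profile V A -> {set A}) a0 (B : {set A}) (P : profile V A) :
  good F -> indep F B -> indep F (~: B) ->
  F P = [set gB F a0 B P; gB F a0 (~: B) P].
Proof.
move=> hF hB hC; have [c2 _ _ _] := hF.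
have [g1 g2] := gB_spec a0 P hF hC.
have hC' : indep F (~: ~: B) by rewrite setCK.
have [h1 h2] := gB_spec (B := ~: B) a0 P hF hC'.
apply: pair_of => //; apply/eqP => e; move: h2; rewrite inE -e g2.
by [].
Qed.

Lemma loc_core (V A : finType) (F : profile V A -> {set A}) a0 (B : {set A}) (P : profile V A) i (L : lorder A) :
  good F -> indep F B -> indep F (~: B) ->
  (forall x y, x \in B -> y \in B -> P i x y = L x y) ->
  gB F a0 B P != gB F a0 B (update P i L) ->
  L (gB F a0 B P) (gB F a0 B (update P i L)) -> False.
Proof.
move=> hF hB hC hloc.
have hC' : indep F (~: ~: B) by rewrite setCK.
have [c2 _ _ _] := hF.
set P' := update P i L.
move=> ngg' hgg'.
have [gP gB'] := gB_spec a0 P hF hC.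
have [g'P g'B] := gB_spec a0 P' hF hC.
have [hP hB'] := gB_spec a0 P hF hC'.
have [h'P h'B] := gB_spec a0 P' hF hC'.
rewrite !inE in hB'; rewrite !inE in h'B.
set g := gB F a0 B P in gP gB' ngg' hgg' *; set g' := gB F a0 B P' in g'P g'B ngg' hgg' *.
set h := gB F a0 (~: B) P in hP hB' *; set h' := gB F a0 (~: B) P' in h'P h'B *.
pose L2 := otop h' (olift [set g; h] (L0 A)).
set W := F (update P i L2).
have eW' : update P' i L2 = update P i L2 by rewrite /P' update_upd.
have [_ [w wP hw]] := sp_dom' P i L2 hF.
have [o2 _] : dom L2 W (F P') by rewrite /W -eW'; apply: sp_dom'.
have [u uW hu] := o2 h' h'P.
have uh' : u = h' by apply: (lanti hu); rewrite /L2 otop_bl.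
subst u.
have [gW gWB] := gB_spec a0 (update P i L2) hF hC.
set gw := gB F a0 B (update P i L2) in gW gWB.
have egw : gw = g.
  have ngh' : gw != h' by apply/eqP => e; rewrite e in gWB; by rewrite gWB in h'B.
  have ngwh : gw != h by apply/eqP => e; rewrite e in gWB; by rewrite gWB in hB'.
  case: (eqVneq gw g) => // ngwg; exfalso.
  have gwS : gw \notin [set g; h] by rewrite !inE negb_or ngwg ngwh.
  have wS : w \in [set g; h] by rewrite -(F_split a0 P hF hB hC).
  have ngww : gw != w by apply/eqP => e; move: gwS; rewrite e wS.
  move: (hw gw gW); rewrite /L2 otopE (negbTE ngww) (negbTE ngh') oliftE (negbTE ngww) (negbTE gwS) wS.
  by case: (w != h').
have gWg : g \in W by rewrite -egw.
have ngh' : g != h' by apply/eqP => e; rewrite e in gB'; by rewrite gB' in h'B.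
have eW : W = [set g; h'] := pair_of (c2 _) gWg uW ngh'.
have d3 : dom L (F P') W.
  have h0 := sp_dom P' i L2 hF.
  have e1 : P' i = L := update_at P i L.
  by rewrite eW' e1 in h0.
have eP' : F P' = [set g'; h'] by apply: F_split.
move: d3; rewrite eP' eW dom2 => [[[o1 _] p]].
have ng'g : ~ L g' g by move=> h1; move: ngg'; rewrite (lanti hgg' h1) eqxx.
have hh'g : L h' g by case: o1.
have hg'h' : L g' h' by case: p => [[]|[]].
by apply: ng'g; apply: ltrans hg'h' hh'g.
Qed.

Lemma loc_step (V A : finType) (F : profile V A -> {set A}) a0 (B : {set A}) (P : profile V A) i (L : lorder A) :
  good F -> indep F B -> indep F (~: B) ->
  (forall x y, x \in B -> y \in B -> P i x y = L x y) ->
  gB F a0 B P = gB F a0 B (update P i L).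
Proof.
move=> hF hB hC hloc; apply/eqP/negPn/negP => hne.
have [gP gBB] := gB_spec a0 P hF hC.
have [g'P g'B] := gB_spec a0 (update P i L) hF hC.
case/orP: (ltot L (gB F a0 B P) (gB F a0 B (update P i L))) => h.
  exact: loc_core hF hB hC hloc hne h.
have hloc' : forall x y, x \in B -> y \in B -> update P i L i x y = P i x y.
  by move=> x y xB yB; rewrite update_at hloc.
have := @loc_core V A F a0 B (update P i L) i (P i) hF hB hC hloc'.
rewrite update_upd update_same; apply; first by rewrite eq_sym.
by rewrite hloc.
Qed.

Lemma loc (V A : finType) (F : profile V A -> {set A}) a0 (B : {set A}) (P Q : profile V A) :
  good F -> indep F B -> indep F (~: B) ->
  (forall j x y, x \in B -> y \in B -> P j x y = Q j x y) ->
  gB F a0 B P = gB F a0 B Q.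
Proof.
move=> hF hB hC hloc.
apply: (chain (Inv := fun M => gB F a0 B P = gB F a0 B M) (Q := P)) => // M i hM hMi.
rewrite hM; apply: loc_step => // x y xB yB; rewrite hMi; exact: hloc.
Qed.

Definition ext (A : finType) (B : {set A}) (Q : lorder (sub_of B)) : lorder A :=
  ord_of (fun x : A => if (insub x : option (sub_of B)) is Some u then rk Q u else 0).

Lemma extE (A : finType) (B : {set A}) (Q : lorder (sub_of B)) (u v : sub_of B) :
  ext Q (val u) (val v) = Q u v.
Proof.
rewrite /ext ord_ofE !valK /=.
case: ifP => [/eqP /val_inj ->|nuv]; first by rewrite lrefl.
have nuv' : u != v by apply/negP => /eqP e; move: nuv; rewrite e eqxx.
have hn := rk_neq Q nuv'.
by rewrite (negbTE hn) /= orbF rk_le ltn_neqAle hn.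
Qed.

Lemma no_tri_red (V A : finType) (F : profile V A -> {set A}) :
  good F -> ~ (exists a b c, [/\ adj F a b, adj F b c & adj F a c]) -> reducible F.
Proof.
move=> hF ntri; have [c2 _ _ _] := hF.
have [a [b [nab eab]]] := pairP (c2 (@prof0 V A)).
have hab : adj F a b by split => //; exists (@prof0 V A).
pose B := [set x | pb (a = x \/ ~ adj F a x)].
have aB : a \in B by rewrite inE; apply/pbP; left.
have bB : b \in ~: B.
  rewrite !inE; apply/negP => /pbP [e|]; last by [].
  by move: nab; rewrite e eqxx.
have hB : indep F B.
  move=> x y; rewrite !inE => /pbP hx /pbP hy hxy.
  case: (eqVneq x a) => [ex|nxa].
    subst x; case: hy => [ey|ny]; last by [].
    by subst y; case: hxy; rewrite eqxx.
  case: (eqVneq y a) => [ey|nya].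
    subst y; case: hx => [ex|nx]; first by move: nxa; rewrite ex eqxx.
    by apply: nx; apply: adj_sym.
  case: hx => [ex|nx]; first by move: nxa; rewrite ex eqxx.
  case: hy => [ey|ny]; first by move: nya; rewrite ey eqxx.
  exact: (nadj_trans hF nxa nya nx ny hxy).
have hC : indep F (~: B).
  move=> x y; rewrite !inE => /pbP hx /pbP hy hxy.
  have ax : adj F a x by apply: NNPP => h; apply: hx; right.
  have ay : adj F a y by apply: NNPP => h; apply: hy; right.
  by apply: ntri; exists a, x, y.
have hC' : indep F (~: ~: B) by rewrite setCK.
pose u0 : sub_of B := exist _ a aB.
pose v0 : sub_of (~: B) := exist _ b bB.
exists B, (~: B); split; first by rewrite -setI_eq0 setICr.
  by rewrite setUCr.
exists (fun Qp => insubd u0 (gB F a B (fun j => ext (Qp j)))).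
exists (fun Qp => insubd v0 (gB F a (~: B) (fun j => ext (Qp j)))).
move=> P; rewrite !val_insubd.
have e1 : gB F a B (fun j => ext (restr P B j)) = gB F a B P.
  apply: loc => // j x y xB yB.
  exact: (extE (restr P B j) (exist _ x xB) (exist _ y yB)).
have e2 : gB F a (~: B) (fun j => ext (restr P (~: B) j)) = gB F a (~: B) P.
  apply: loc => // j x y xB yB.
  exact: (extE (restr P (~: B) j) (exist _ x xB) (exist _ y yB)).
rewrite e1 e2.
have [_ ->] := gB_spec a P hF hC.
have [_ ->] := gB_spec (B := ~: B) a P hF hC'.
exact: F_split.
Qed.

Definition anc (V A : finType) (z x y : A) (P : profile V A) : profile V A :=
  fun j => otop z (olift [set x; y] (P j)).

Definition arel (V A : finType) (F : profile V A -> {set A}) (z : A) (P : profile V A) (x y : A) : bool :=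
  F (anc z x y P) == [set z; x].

Lemma lnotE (T : Type) (L : lorder T) x y : x <> y -> L y x = ~~ L x y.
Proof.
move=> nxy; case h: (L x y) => /=.
  by apply/negP => h'; apply: nxy; apply: lanti h h'.
by apply: lnot; rewrite h.
Qed.

Lemma ancE (V A : finType) z x y (P : profile V A) j u w :
  anc z x y P j u w = (u == w) || (u == z) || ((w != z) &&
     (if u \in [set x; y] then (w \notin [set x; y]) || P j u w else (w \notin [set x; y]) && P j u w)).
Proof. by rewrite /anc otopE oliftE; case: (u == w). Qed.

Lemma anc_pair (V A : finType) (F : profile V A -> {set A}) z x y (P : profile V A) :
  good F -> adj F z x -> adj F z y -> x != y ->
  F (anc z x y P) = [set z; x] \/ F (anc z x y P) = [set z; y].
Proof.
move=> hF hzx hzy nxy; have [c2 _ _ _] := hF.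
have zin : z \in F (anc z x y P) by apply: topu => // j w; rewrite /anc otop_bl.
have sub : F (anc z x y P) \subset [set z; x; y].
  apply: topseg => //.
    case: hzx => _ [Q hQ]; exists Q; rewrite hQ.
    by apply/subsetP => u; rewrite !inE => /orP [] ->; rewrite ?orbT.
  move=> j u w; rewrite !inE !negb_or => uS /andP [/andP [nwz nwx] nwy].
  rewrite ancE; move: uS => /orP [/orP [/eqP ->|/eqP ->]|/eqP ->];
  by rewrite ?eqxx ?orbT //= nwz !inE (negbTE nwx) (negbTE nwy) ?eqxx ?orbT.
have [s sF nsz] := other_of (c2 _) zin.
have nzs : z != s by rewrite eq_sym.
have e := pair_of (c2 _) zin sF nzs.
have : s \in [set z; x; y] by apply: (subsetP sub).
rewrite !inE (negbTE nsz) /= => /orP [] /eqP es; subst s; [left|right]; exact: e.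
Qed.

Lemma set2_neq (A : finType) (z x y : A) : x != z -> x != y -> [set z; x] != [set z; y].
Proof.
move=> nxz nxy; apply/negP => /eqP e.
by have := set22 z x; rewrite e !inE (negbTE nxz) (negbTE nxy).
Qed.

Lemma anc_sym (V A : finType) z x y (P : profile V A) : anc z y x P = anc z x y P.
Proof. by rewrite /anc setUC. Qed.

Lemma arel_anti (V A : finType) (F : profile V A -> {set A}) z (P : profile V A) x y :
  good F -> adj F z x -> adj F z y -> x != y -> arel F z P x y = ~~ arel F z P y x.
Proof.
move=> hF hzx hzy nxy; rewrite /arel (anc_sym z x y).
have nxz : x != z by case: hzx; rewrite eq_sym.
have nyz : y != z by case: hzy; rewrite eq_sym.
have nyx : y != x by rewrite eq_sym.
case: (anc_pair P hF hzx hzy nxy) => ->; rewrite eqxx.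
- by rewrite (negbTE (set2_neq nxz nxy)).
- by rewrite (negbTE (set2_neq nyz nyx)).
Qed.

Lemma anc_eq (V A : finType) z x y (P Q : profile V A) j u w :
  x != y -> (forall j, P j x y = Q j x y) -> u \in [set z; x; y] ->
  anc z x y P j u w = anc z x y Q j u w.
Proof.
move=> nxy hPQ uS; rewrite !ancE.
case: (eqVneq u w) => [//|nuw]; case: (eqVneq u z) => [//|nuz] /=.
have uxy : u \in [set x; y] by move: uS; rewrite !inE (negbTE nuz).
rewrite uxy.
case: (boolP (w \in [set x; y])) => wxy //=; case: (w != z) => //=.
move: uxy wxy; rewrite !inE => /orP [] /eqP eu /orP [] /eqP ew; subst u w.
- by rewrite eqxx in nuw.
- by rewrite hPQ.
- have nxy' : x <> y by apply/eqP.
  by rewrite (lnotE (P j) nxy') (lnotE (Q j) nxy') hPQ.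
- by rewrite eqxx in nuw.
Qed.

Lemma arel_iia (V A : finType) (F : profile V A -> {set A}) z (P Q : profile V A) x y :
  good F -> adj F z x -> adj F z y -> x != y -> (forall j, P j x y = Q j x y) ->
  arel F z P x y = arel F z Q x y.
Proof.
move=> hF hzx hzy nxy hPQ; rewrite /arel.
suff -> : F (anc z x y Q) = F (anc z x y P) by [].
apply: mon => // j u w uF _.
have uS : u \in [set z; x; y].
  by case: (anc_pair P hF hzx hzy nxy) uF => -> ; rewrite !inE => /orP [] ->; rewrite ?orbT.
by rewrite (@anc_eq V A z x y P Q j u w nxy hPQ uS).
Qed.

Lemma arel_par (V A : finType) (F : profile V A -> {set A}) z (P : profile V A) x y :
  good F -> adj F z x -> adj F z y -> x != y -> (forall j, P j x y) -> arel F z P x y.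
Proof.
move=> hF hzx hzy nxy hP; rewrite /arel; apply/eqP; apply: top2 => //.
  by case: hzx.
move=> j w nwz nwx; apply/andP; split; first by rewrite ancE eqxx !orbT.
rewrite ancE nwz set21 /=.
case: (eqVneq w y) => [->|nwy]; first by rewrite hP !orbT.
by rewrite !inE (negbTE nwx) (negbTE nwy) /= !orbT.
Qed.

Lemma sub3_drop (A : finType) (S : {set A}) x y w :
  #|S| = 2 -> S \subset [set x; y; w] -> x \notin S -> y != w -> S = [set y; w].
Proof.
move=> cS sub xS nyw; apply/eqP; rewrite eqEcard cS cards2 nyw andbT.
apply/subsetP => u uS; have := subsetP sub u uS; rewrite !inE => /orP [/orP [/eqP eu|->]|->];
  rewrite ?orbT //.
by move: xS; rewrite -eu uS.
Qed.

Lemma arel_trans_z (V A : finType) (F : profile V A -> {set A}) z (P : profile V A) x y w :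
  good F -> adj F z x -> adj F z y -> adj F z w -> x != y -> y != w -> x != w ->
  arel F z P x y -> arel F z P y w -> arel F z P x w.
Proof.
move=> hF hzx hzy hzw nxy nyw nxw hxy hyw; have [c2 _ _ _] := hF.
have nxz : x != z by case: hzx; rewrite eq_sym.
have nyz : y != z by case: hzy; rewrite eq_sym.
have nwz : w != z by case: hzw; rewrite eq_sym.
pose P4 : profile V A := fun j => otop z (olift [set x; y; w] (P j)).
have zin : z \in F P4 by apply: topu => // j u; rewrite /P4 otop_bl.
have sub : F P4 \subset [set z; x; y; w].
  apply: topseg => //.
    case: hzx => _ [Q hQ]; exists Q; rewrite hQ.
    by apply/subsetP => u; rewrite !inE => /orP [] ->; rewrite ?orbT.
  move=> j u w'; rewrite !inE !negb_or => uS /andP [/andP [/andP [nz nx] ny] nw].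
  have w'S : w' \notin [set x; y; w] by rewrite !inE !negb_or nx ny nw.
  rewrite /P4 otopE nz oliftE w'S.
  case/orP: uS => [/orP [/orP [/eqP ->|/eqP ->]|/eqP ->]|/eqP ->]; first by rewrite eqxx !orbT.
  - by rewrite (_ : x \in _ = true) ?orbT //; rewrite !inE eqxx.
  - by rewrite (_ : y \in _ = true) ?orbT //; rewrite !inE eqxx ?orbT.
  - by rewrite (_ : w \in _ = true) ?orbT //; rewrite !inE eqxx ?orbT.
have [g gF ngz] := other_of (c2 _) zin.
have eF : F P4 = [set z; g] by apply: pair_of => //; rewrite eq_sym.
have gS : g \in [set x; y; w].
  by have := subsetP sub g gF; rewrite !inE (negbTE ngz).
have key : forall h, h \in [set x; y; w] -> h != g -> arel F z P g h.
  move=> h hS nhg; rewrite /arel; apply/eqP; rewrite -eF.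
  apply: mon => // j u w'; rewrite eF !inE negb_or => /orP [] /eqP -> /andP [nw'z nw'g] hu.
    by rewrite ancE eqxx orbT.
  have ngh : g != h by rewrite eq_sym.
  have nhz : h != z by move: hS; rewrite !inE => /orP [/orP [] /eqP ->|/eqP ->].
  rewrite ancE (negbTE ngz) nw'z set21 /=.
  case: (eqVneq w' h) => [ew|nw'h].
    subst w'; have hgh : P j g h.
      by move: hu; rewrite /P4 otop_oth // oliftE gS hS (negbTE ngh).
    by rewrite hgh !orbT.
  have w'n : w' \notin [set g; h] by rewrite !inE negb_or nw'g nw'h.
  by rewrite w'n !orbT.
move: gS; rewrite !inE => /orP [/orP [] /eqP eg|/eqP eg]; subst g.
- by apply: key; rewrite ?inE ?eqxx ?orbT // eq_sym.
- by move: hxy; rewrite arel_anti // key ?inE ?eqxx ?orbT // eq_sym.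
- by move: hyw; rewrite arel_anti // ?key ?inE ?eqxx ?orbT //; rewrite eq_sym.
Qed.

Lemma arel_loser (V A : finType) (F : profile V A -> {set A}) (P : profile V A) (T : {set A}) u v e :
  good F -> adj F v u -> adj F v e -> u != e ->
  F (fun j => olift T (P j)) = [set u; v] -> u \in T -> e \in T -> e != v ->
  arel F v P u e.
Proof.
move=> hF hvu hve nue eF uT eT nev; rewrite /arel; apply/eqP.
have nuv : u != v by case: hvu; rewrite eq_sym.
rewrite (setUC [set v]) -eF.
apply: mon => // j u' w'; rewrite eF !inE negb_or => /orP [] /eqP -> /andP [nw'u nw'v] hu.
  rewrite ancE; case: (eqVneq u w') => [//|nuw'] /=.
  rewrite (negbTE nuv) nw'v set21 /=.
  case: (boolP (w' \in [set u; e])) => //=; rewrite !inE (negbTE nw'u) /= => /eqP ew; subst w'.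
  by move: hu; rewrite oliftE uT eT /= (negbTE nue).
by rewrite ancE eqxx orbT.
Qed.

Lemma arel_trans_T (V A : finType) (F : profile V A -> {set A}) (P : profile V A) x y w :
  good F -> adj F x y -> adj F y w -> adj F x w ->
  arel F w P x y -> arel F x P y w -> arel F y P x w.
Proof.
move=> hF hxy hyw hxw h1 h2; have [c2 _ _ _] := hF.
have nxy : x != y by case: hxy.
have nyw : y != w by case: hyw.
have nxw : x != w by case: hxw.
pose T := [set x; y; w].
have xT : x \in T by rewrite !inE eqxx.
have yT : y \in T by rewrite !inE eqxx orbT.
have wT : w \in T by rewrite !inE eqxx !orbT.
have sub : F (fun j => olift T (P j)) \subset T.
  apply: topseg => //.
    case: hxy => _ [Q hQ]; exists Q; rewrite hQ.
    by apply/subsetP => u; rewrite !inE => /orP [] ->; rewrite ?orbT.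
  by move=> j u w' uT w'T; rewrite oliftE uT w'T orbT.
set S := F (fun j => olift T (P j)) in sub *.
have nyx : y != x by rewrite eq_sym.
have nwx : w != x by rewrite eq_sym.
have nwy : w != y by rewrite eq_sym.
case: (boolP (x \in S)) => xF; last first.
  have eF := sub3_drop (c2 _) sub xF nyw.
  have := arel_loser hF (adj_sym hyw) (adj_sym hxw) nyx eF yT xT nxw.
  by move: h1; rewrite (arel_anti _ hF (adj_sym hxw) (adj_sym hyw) nxy) => /negbTE ->.
case: (boolP (y \in S)) => yF; last first.
  have sub' : S \subset [set y; x; w].
    by apply: subset_trans sub _; apply/subsetP => u; rewrite !inE => /orP [/orP [] ->|->]; rewrite ?orbT.
  have eF := sub3_drop (c2 _) sub' yF nxw.
  have eF' : S = [set w; x] by rewrite setUC; exact: eF.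
  have := arel_loser hF hxw hxy nwy eF' wT yT nyx.
  by move: h2; rewrite (arel_anti _ hF hxy hxw nyw) => /negbTE ->.
have eF : S = [set x; y] := pair_of (c2 _) xF yF nxy.
exact: (arel_loser hF (adj_sym hxy) hyw nxw eF xT wT nwy).
Qed.

Definition Dz (V A : finType) (F : profile V A -> {set A}) (z : A) (d : V) : Prop :=
  forall P : profile V A, (forall j w, P j z w) -> forall y, adj F z y ->
    (forall y', adj F z y' -> P d y y') -> F P = [set z; y].

Lemma dz_of_pairs (V A : finType) (F : profile V A -> {set A}) z d :
  good F -> (forall P x y, adj F z x -> adj F z y -> x != y -> arel F z P x y = P d x y) ->
  Dz F z d.
Proof.
move=> hF hd P hz y hzy hbest; have [c2 _ _ _] := hF.
have zin : z \in F P by apply: topu.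
have [g gF ngz] := other_of (c2 _) zin.
have nzg : z != g by rewrite eq_sym.
have eF : F P = [set z; g] by apply: pair_of.
have hzg : adj F z g by apply: (adj_of (P := P)).
case: (eqVneq g y) => [<- //|ngy].
have nyg : y != g by rewrite eq_sym.
have ha : arel F z P y g by rewrite hd // hbest.
move/eqP: ha => <-; symmetry; apply: mon => // j u w; rewrite eF !inE negb_or.
move=> /orP [] /eqP -> /andP [nwz nwg] hu; rewrite ancE ?eqxx ?orbT //.
rewrite nwz (negbTE ngz) /= !inE eqxx orbT /=.
case: (eqVneq w y) => [ew|nwy]; first by subst w; rewrite hu !orbT.
by rewrite (negbTE nwg) /= ?orbT.
Qed.

Lemma dz_pairs (V A : finType) (F : profile V A -> {set A}) z d (P : profile V A) x y :
  good F -> Dz F z d -> adj F z x -> adj F z y -> x != y -> arel F z P x y = P d x y.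
Proof.
move=> hF hD hzx hzy nxy.
have nxz : x != z by case: hzx; rewrite eq_sym.
have nyz : y != z by case: hzy; rewrite eq_sym.
pose b := if P d x y then x else y.
have hb : adj F z b by rewrite /b; case: ifP.
have nbz : b != z by rewrite /b; case: ifP.
have bS : b \in [set x; y] by rewrite /b; case: ifP; rewrite !inE eqxx ?orbT.
have eF : F (anc z x y P) = [set z; b].
  apply: hD => //; first by move=> j w; rewrite ancE eqxx orbT.
  move=> y' hzy'; have ny'z : y' != z by case: hzy'; rewrite eq_sym.
  rewrite ancE.
  case: (eqVneq b y') => [_|nby']; first by [].
  have key : P d b y' \/ y' \notin [set x; y].
    case: (boolP (y' \in [set x; y])); last by right.
    rewrite !inE => /orP [] /eqP ey'; subst y'; left.
    + move: nby'; rewrite /b; case: ifP => h; first by rewrite eqxx.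
      have nxy' : x <> y by apply/eqP.
      by move=> _; rewrite (lnotE (P d) nxy') h.
    + by move: nby'; rewrite /b; case: ifP => h; rewrite ?eqxx.
  rewrite (negbTE nbz) ny'z bS /=.
  by case: key => ->; rewrite ?orbT.
rewrite /arel eF /b; case: ifP => h; first by rewrite eqxx.
by apply/negbTE/set2_neq => //; rewrite eq_sym.
Qed.

Lemma same_voter (V A : finType) (d1 d2 : V) x y :
  x != y -> (forall P : profile V A, P d1 x y = P d2 x y) -> d1 = d2.
Proof.
move=> nxy h; apply/eqP/negP => /negP nd.
pose P : profile V A := fun j => if j == d1 then otop x (L0 A) else otop y (L0 A).
have nd' : d2 != d1 by rewrite eq_sym.
have nxy' : x != y := nxy.
have := h P; rewrite /P eqxx (negbTE nd') otop_bl otop_br //.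
Qed.

Definition third (A : finType) (T : {set A}) (a0 x y : A) : A :=
  odflt a0 [pick w in T :\: [set x; y]].

Lemma third_spec (A : finType) (T : {set A}) a0 x y :
  #|T| = 3 -> x \in T -> y \in T -> x != y ->
  [/\ third T a0 x y \in T, third T a0 x y != x, third T a0 x y != y &
      forall w, w \in T -> w != x -> w != y -> w = third T a0 x y].
Proof.
move=> c3 xT yT nxy.
have e2 : T :&: [set x; y] = [set x; y].
  by apply/setIidPr/subsetP => u; rewrite !inE => /orP [] /eqP ->.
have c1 : #|T :\: [set x; y]| = 1 by rewrite cardsD e2 cards2 nxy c3.
have [t et] := cards1P (introT eqP c1).
have tin : t \in T :\: [set x; y] by rewrite et set11.
have -> : third T a0 x y = t.
  rewrite /third; case: pickP => [u|]; first by rewrite -/(_ \in _) et inE => /eqP ->.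
  by move/(_ t); rewrite tin.
move: (tin); rewrite !inE negb_or => /andP [/andP [ntx nty] tT].
split => // w wT nwx nwy; apply/eqP; rewrite -in_set1 -et !inE negb_or nwx nwy.
exact: wT.
Qed.

Lemma third_sym (A : finType) (T : {set A}) a0 x y : third T a0 x y = third T a0 y x.
Proof. by rewrite /third setUC. Qed.

Lemma tri_dict (V A : finType) (F : profile V A -> {set A}) a b c :
  good F -> adj F a b -> adj F b c -> adj F a c ->
  exists d, forall (P : profile V A) x y w,
    x \in [set a; b; c] -> y \in [set a; b; c] -> w \in [set a; b; c] ->
    x != y -> x != w -> y != w -> arel F w P x y = P d x y.
Proof.
move=> hF hab hbc hac.
set T := [set a; b; c].
have nab : a != b by case: hab.
have nbc : b != c by case: hbc.
have nac : a != c by case: hac.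
have c3 : #|T| = 3.
  rewrite /T -setUA cardsU1 cards2 nbc !inE negb_or nab nac.
  by [].
have adjT : forall u v, u \in T -> v \in T -> u != v -> adj F u v.
  move=> u v; rewrite !inE => /orP [/orP [] /eqP -> | /eqP ->] /orP [/orP [] /eqP -> | /eqP ->];
  rewrite ?eqxx // => _; by [apply: adj_sym | ].
pose rel (P : profile V A) x y := arel F (third T a x y) P x y.
have [d hd] : exists d, forall (P : profile V A) x y, x \in T -> y \in T -> x != y -> rel P x y = P d x y.
  apply: arrow; last by rewrite c3.
  - move=> P x y xT yT nxy; rewrite /rel (third_sym T a y x).
    have [tT ntx nty _] := third_spec a c3 xT yT nxy.
    apply: arel_anti => //; apply: adjT => //; by rewrite eq_sym.
  - move=> P x y z xT yT zT nxy nyz nxz.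
    have [_ _ _ u1] := third_spec a c3 xT yT nxy.
    have [_ _ _ u2] := third_spec a c3 yT zT nyz.
    have [_ _ _ u3] := third_spec a c3 xT zT nxz.
    have nzx : z != x by rewrite eq_sym.
    have nzy : z != y by rewrite eq_sym.
    have nyx : y != x by rewrite eq_sym.
    rewrite /rel -(u1 z zT nzx nzy) -(u2 x xT nxy nxz) -(u3 y yT nyx nyz).
    apply: arel_trans_T => //; apply: adjT => //.
  - move=> P x y xT yT nxy hP; rewrite /rel.
    have [tT ntx nty _] := third_spec a c3 xT yT nxy.
    by apply: arel_par => //; apply: adjT.
  - move=> P Q x y xT yT nxy hPQ; rewrite /rel.
    have [tT ntx nty _] := third_spec a c3 xT yT nxy.
    by apply: arel_iia => //; apply: adjT.
exists d => P x y w xT yT wT nxy nxw nyw.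
have [_ _ _ u1] := third_spec a c3 xT yT nxy.
have nwx : w != x by rewrite eq_sym.
have nwy : w != y by rewrite eq_sym.
rewrite (u1 w wT nwx nwy); exact: (hd P x y xT yT nxy).
Qed.

Lemma ncl2 (V A : finType) (F : profile V A -> {set A}) x u v :
  good F -> (x = u \/ ~ adj F x u) -> (x = v \/ ~ adj F x v) -> adj F u v -> False.
Proof.
move=> hF hu hv huv.
have nuv : u != v by case: huv.
case: hu => [exu|nxu].
  subst u; case: hv => [exv|nxv]; last by apply: nxv.
  by subst v; rewrite eqxx in nuv.
case: hv => [exv|nxv].
  by subst v; apply: nxu; apply: adj_sym.
have nux : u != x by apply/eqP => e; subst u; exact: nxv huv.
have nvx : v != x by apply/eqP => e; subst v; apply: nxu; apply: adj_sym.
exact: (nadj_trans hF nux nvx nxu nxv huv).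
Qed.

Lemma adj_of_ncl (V A : finType) (F : profile V A -> {set A}) x u :
  ~ (x = u \/ ~ adj F x u) -> adj F x u.
Proof. by move=> h; apply: NNPP => h'; apply: h; right. Qed.

Lemma tri_two (V A : finType) (F : profile V A -> {set A}) a b c x :
  good F -> adj F a b -> adj F b c -> adj F a c ->
  (adj F x a /\ adj F x b) \/ (adj F x a /\ adj F x c) \/ (adj F x b /\ adj F x c).
Proof.
move=> hF hab hbc hac.
case: (classic (x = a \/ ~ adj F x a)) => ha;
case: (classic (x = b \/ ~ adj F x b)) => hb;
case: (classic (x = c \/ ~ adj F x c)) => hc.
all: try (by exfalso; apply: (ncl2 hF ha hb hab)).
all: try (by exfalso; apply: (ncl2 hF hb hc hbc)).
all: try (by exfalso; apply: (ncl2 hF ha hc hac)).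
- by right; right; split; apply: adj_of_ncl.
- by right; left; split; apply: adj_of_ncl.
- by left; split; apply: adj_of_ncl.
- by left; split; apply: adj_of_ncl.
Qed.

Lemma common_nb (V A : finType) (F : profile V A -> {set A}) a b c x y :
  good F -> adj F a b -> adj F b c -> adj F a c ->
  exists w, adj F w x /\ adj F w y.
Proof.
move=> hF hab hbc hac.
have [[x1 x2]|[[x1 x2]|[x1 x2]]] := tri_two x hF hab hbc hac;
have [[y1 y2]|[[y1 y2]|[y1 y2]]] := tri_two y hF hab hbc hac.
all: first [ exists a; split; apply: adj_sym; assumption
           | exists b; split; apply: adj_sym; assumption
           | exists c; split; apply: adj_sym; assumption ].
Qed.

Definition Nb (V A : finType) (F : profile V A -> {set A}) (z : A) : {set A} :=
  [set y | pb (adj F z y)].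

Lemma NbP (V A : finType) (F : profile V A -> {set A}) z y : (y \in Nb F z) <-> adj F z y.
Proof. by rewrite inE; split => [/pbP|/pbP]. Qed.

Lemma dz_exists (V A : finType) (F : profile V A -> {set A}) a b c z :
  good F -> adj F a b -> adj F b c -> adj F a c -> exists d, Dz F z d.
Proof.
move=> hF hab hbc hac.
case: (ltnP 2 #|Nb F z|) => hN.
  have [d hd] : exists d, forall (P : profile V A) x y, x \in Nb F z -> y \in Nb F z -> x != y ->
                  arel F z P x y = P d x y.
    apply: arrow => //.
    - by move=> P x y /NbP hx /NbP hy nxy; apply: arel_anti.
    - move=> P x y w /NbP hx /NbP hy /NbP hw nxy nyw nxw; exact: arel_trans_z.
    - by move=> P x y /NbP hx /NbP hy nxy hP; apply: arel_par.
    - by move=> P Q x y /NbP hx /NbP hy nxy hPQ; apply: arel_iia.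
  exists d; apply: dz_of_pairs => // P x y hx hy nxy; apply: hd => //; exact/NbP.
have [p [q [hzp hzq hpq npq]]] : exists p q, [/\ adj F z p, adj F z q, adj F p q & p != q].
  have [[h1 h2]|[[h1 h2]|[h1 h2]]] := tri_two z hF hab hbc hac.
  - by exists a, b; split => //; case: hab.
  - by exists a, c; split => //; case: hac.
  - by exists b, c; split => //; case: hbc.
have eN : Nb F z = [set p; q].
  apply/eqP; rewrite eq_sym eqEcard cards2 npq (leq_trans hN) ?andbT //.
  by apply/subsetP => u; rewrite !inE => /orP [] /eqP ->; apply/pbP.
have [d hd] := tri_dict hF hzp hpq hzq.
exists d; apply: dz_of_pairs => // P x y hx hy nxy.
have nxz : x != z by case: hx; rewrite eq_sym.
have nyz : y != z by case: hy; rewrite eq_sym.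
have xS : x \in [set z; p; q] by move/NbP: hx; rewrite eN !inE => /orP [] ->; rewrite ?orbT.
have yS : y \in [set z; p; q] by move/NbP: hy; rewrite eN !inE => /orP [] ->; rewrite ?orbT.
have zS : z \in [set z; p; q] by rewrite !inE eqxx.
exact: hd P x y z xS yS zS nxy nxz nyz.
Qed.

Lemma link (V A : finType) (F : profile V A -> {set A}) a b c z z' d1 d2 :
  good F -> adj F a b -> adj F b c -> adj F a c ->
  adj F z z' -> Dz F z d1 -> Dz F z' d2 -> d1 = d2.
Proof.
move=> hF hab hbc hac hzz' h1 h2.
have [w [hwz hwz']] := common_nb z z' hF hab hbc hac.
have [dT hT] := tri_dict hF hzz' (adj_sym hwz') (adj_sym hwz).
have nzz' : z != z' by case: hzz'.
have nz'w : z' != w by case: hwz'; rewrite eq_sym.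
have nzw : z != w by case: hwz; rewrite eq_sym.
have iz : z \in [set z; z'; w] by rewrite !inE eqxx.
have iz' : z' \in [set z; z'; w] by rewrite !inE eqxx orbT.
have iw : w \in [set z; z'; w] by rewrite !inE eqxx !orbT.
have e1 : d1 = dT.
  apply: (same_voter nz'w) => P.
  rewrite -(dz_pairs P hF h1 hzz' (adj_sym hwz) nz'w).
  by apply: hT => //; rewrite eq_sym.
have e2 : d2 = dT.
  apply: (same_voter nzw) => P.
  rewrite -(dz_pairs P hF h2 (adj_sym hzz') (adj_sym hwz') nzw).
  by apply: hT => //; rewrite eq_sym.
by rewrite e1 e2.
Qed.

Lemma all_dz (V A : finType) (F : profile V A -> {set A}) a b c :
  good F -> adj F a b -> adj F b c -> adj F a c -> exists d, forall z, Dz F z d.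
Proof.
move=> hF hab hbc hac.
have [d0 h0] := dz_exists a hF hab hbc hac.
exists d0 => z.
have [dz hz] := dz_exists z hF hab hbc hac.
have [w [hwa hwz]] := common_nb a z hF hab hbc hac.
have [dw hw] := dz_exists w hF hab hbc hac.
have e1 := link hF hab hbc hac (adj_sym hwa) h0 hw.
have e2 := link hF hab hbc hac hwz hw hz.
by rewrite e1 e2.
Qed.

Lemma step1_aux (V A : finType) (F : profile V A -> {set A}) d (P : profile V A) t y y' :
  good F -> (forall z, Dz F z d) -> (forall x, P d t x) ->
  t \notin F P -> F P = [set y; y'] -> adj F t y -> False.
Proof.
move=> hF hD htop tn eF hty.
pose P' : profile V A := fun j => if j == d then P j else otop y (otop y' (P j)).
have eP' : F P' = F P.
  apply: mon => // j u w; rewrite eF /P'; case: (j == d) => // uF wF _.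
  move: uF wF; rewrite !inE negb_or => /orP [] /eqP -> /andP [nwy nwy'].
    by rewrite otop_bl.
  by rewrite otopE nwy otop_bl !orbT.
pose L := otop y (otop t (P d)).
have := @ne_lem V A F P' d L t hF.
rewrite eP' => /(_ tn); rewrite /P' eqxx => /(_ (fun x _ => htop x)).
have nyt : y != t by case: hty; rewrite eq_sym.
have Hw : forall j w, update P' d L j y w.
  move=> j w; case: (eqVneq j d) => [->|njd]; first by rewrite update_at /L otop_bl.
  by rewrite update_oth // /P' (negbTE njd) otop_bl.
have Hb : forall y'', adj F y y'' -> update P' d L d t y''.
  move=> y'' hyy''; have ny'' : y'' != y by case: hyy''; rewrite eq_sym.
  have nty : t != y by rewrite eq_sym.
  by rewrite update_at /L (otop_oth _ nty ny'') otop_bl.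
have eU := hD y (update P' d L) Hw t (adj_sym hty) Hb.
by rewrite eU !inE eqxx orbT.
Qed.

Lemma lift (V A : finType) (F : profile V A -> {set A}) a b c d :
  good F -> adj F a b -> adj F b c -> adj F a c -> (forall z, Dz F z d) -> range_dictator F.
Proof.
move=> hF hab hbc hac hD; have [c2 _ _ wv] := hF.
exists d => P.
have nT : [set: A] != set0 by apply/set0Pn; exists a.
have [t _ htop'] := best_ex (P d) nT.
have htop : forall x, P d t x by move=> x; apply: htop'.
have tin : t \in F P.
  case: (boolP (t \in F P)) => // tn; exfalso.
  have [y1 [y2 [ny eF]]] := pairP (c2 P).
  have y1F : y1 \in F P by rewrite eF set21.
  have y2F : y2 \in F P by rewrite eF set22.
  have hy12 : adj F y1 y2 by apply: (adj_of (P := P)).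
  case: (classic (adj F t y1)) => h1; first exact: (step1_aux hF hD htop tn eF h1).
  case: (classic (adj F t y2)) => h2.
    have eF' : F P = [set y2; y1] by rewrite eF setUC.
    exact: (step1_aux hF hD htop tn eF' h2).
  have n1 : y1 != t by apply/eqP => e; move: tn; rewrite -e y1F.
  have n2 : y2 != t by apply/eqP => e; move: tn; rewrite -e y2F.
  exact: (nadj_trans hF n1 n2 h1 h2 hy12).
have [u uF nut] := other_of (c2 P) tin.
have ntu : t != u by rewrite eq_sym.
have eFP : F P = [set t; u] := pair_of (c2 P) tin uF ntu.
have [Q tQ] := wv t.
have [v vQ nvt] := other_of (c2 Q) tQ.
have htv : adj F t v by apply: (adj_of (P := Q)) => //; rewrite eq_sym.
have nN : Nb F t != set0 by apply/set0Pn; exists v; apply/NbP.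
have [s /NbP hts hs'] := best_ex (P d) nN.
have hs : forall y, adj F t y -> P d s y by move=> y /NbP; apply: hs'.
pose P'' : profile V A := fun j => if j == d then P j else otop t (otop u (P j)).
have e'' : F P'' = F P.
  apply: mon => // j x w; rewrite eFP /P''; case: (j == d) => // xF wF _.
  move: xF wF; rewrite !inE negb_or => /orP [] /eqP -> /andP [nwt nwu].
    by rewrite otop_bl.
  by rewrite otopE nwt otop_bl !orbT.
have eFs : F P = [set t; s].
  have Hw : forall j w, P'' j t w.
    move=> j w; rewrite /P''; case: eqP => [->|_]; [exact: htop | exact: otop_bl].
  have Hb : forall y', adj F t y' -> P'' d s y'.
    by move=> y' hy'; rewrite /P'' eqxx; apply: hs.
  rewrite -e''; exact: hD t P'' Hw s hts Hb.
split; first by exists P.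
move=> Y [Q' eQ]; split.
  move=> b0 b' [b0F hb0] [b'Y hb']; exact: ltrans (hb0 t tin) (htop b').
move=> w w' [wF hw] [w'Y hw'].
have [y yY hsy] : exists2 y, y \in Y & P d s y.
  have [y1 [y2 [ny eY]]] := pairP (c2 Q').
  have y1Y : y1 \in Y by rewrite -eQ eY set21.
  have y2Y : y2 \in Y by rewrite -eQ eY set22.
  case: (boolP (P d s y1)) => h1; first by exists y1.
  case: (boolP (P d s y2)) => h2; first by exists y2.
  exfalso.
  have hy12 : adj F y1 y2 by apply: (adj_of (P := Q')); rewrite ?eY ?set21 ?set22.
  case: (eqVneq y1 t) => [e1|n1].
    by subst y1; move/negP: h2; apply; apply: hs.
  case: (eqVneq y2 t) => [e2|n2].
    by subst y2; move/negP: h1; apply; apply: hs; apply: adj_sym.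
  have nt1 : ~ adj F t y1 by move=> h; move/negP: h1; apply; apply: hs.
  have nt2 : ~ adj F t y2 by move=> h; move/negP: h2; apply; apply: hs.
  exact: (nadj_trans hF n1 n2 nt1 nt2 hy12).
have hsw' : P d s w' := ltrans hsy (hw' y yY).
move: wF; rewrite eFs !inE => /orP [] /eqP -> //.
Qed.

Theorem corollary52 (V A : finType) (F : profile V A -> {set A}) :
  0 < #|V| ->
  (forall P : profile V A, #|F P| = 2) ->
  irreducible F -> weakly_viable F -> SPO F -> SPP F ->
  range_dictator F.
Proof.
move=> _ c2 irr wv spo spp.
have hF : good F by split.
have [a [b [c [hab hbc hac]]]] : exists a b c, [/\ adj F a b, adj F b c & adj F a c].
  by apply: NNPP => h; apply: irr; exact: no_tri_red hF h.
have [d hd] := all_dz hF hab hbc hac.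
exact: lift hF hab hbc hac hd.
Qed.
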